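(* Let $X$ be a first countable, connected, locally path connected space, $n\in\mathbb{N}$, and let $A_1,\dots,A_n$ be pairwise disjoint, path connected, closed subsets of $X$. Let $p:X\to X/(A_1,\dots,A_n)$ be the associated quotient map. Then for every $a\in\bigcup_{i=1}^nA_i$, with $*=p(a)$, $\overline{p_*\pi_1^{top}(X,a)}=\pi_1^{top}(X/(A_1,\dots,A_n),* )$.
   Context: For subsets $A_1,\dots,A_n$ of a space $X$, $X/(A_1,\dots,A_n)$ denotes the quotient space obtained by collapsing each $A_i$ to a point, with quotient map $p$. $\pi_1^{top}(X,x)$ is $\pi_1(X,x)$ with the quotient topology from the loop space $\Omega(X,x)$ with the compact-open topology; $p_*$ is the induced continuous homomorphism. *)

(* Defs.v *)
From Stdlib Require Import Reals Lra List.
Open Scope R_scope.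

Record Top := {
  carrier :> Type;
  is_open : (carrier -> Prop) -> Prop;
  open_full : is_open (fun _ => True);
  open_inter : forall U V, is_open U -> is_open V -> is_open (fun x => U x /\ V x);
  open_union : forall (J : Type) (F : J -> carrier -> Prop),
      (forall j, is_open (F j)) -> is_open (fun x => exists j, F j x)
}.
Arguments is_open {t} _.

Definition is_closed {X : Top} (A : X -> Prop) : Prop :=
  is_open (fun x => ~ A x).

Definition continuous {X Y : Top} (f : X -> Y) : Prop :=
  forall V : Y -> Prop, is_open V -> is_open (fun x => V (f x)).

(** The unit interval [0,1] (as a subspace of R), maps out of it are
    represented by functions R -> X, only their values on [0,1] matter. *)
Definition inI (t : R) : Prop := 0 <= t <= 1.

Definition cont_on_I {X : Top} (f : R -> X) : Prop :=
  forall (U : X -> Prop), is_open U -> forall t, inI t -> U (f t) ->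
    exists eps, 0 < eps /\ forall s, inI s -> Rabs (s - t) < eps -> U (f s).

Definition cont_on_I2 {X : Top} (H : R -> R -> X) : Prop :=
  forall (U : X -> Prop), is_open U -> forall s t, inI s -> inI t -> U (H s t) ->
    exists eps, 0 < eps /\ forall s' t', inI s' -> inI t' ->
      Rabs (s' - s) < eps -> Rabs (t' - t) < eps -> U (H s' t').

Definition is_path {X : Top} (g : R -> X) (x y : X) : Prop :=
  cont_on_I g /\ g 0 = x /\ g 1 = y.

Definition is_loop {X : Top} (x : X) (g : R -> X) : Prop := is_path g x x.

Definition loop_homotopic {X : Top} (x : X) (f g : R -> X) : Prop :=
  exists H : R -> R -> X, cont_on_I2 H /\
    (forall t, inI t -> H 0 t = f t) /\ (forall t, inI t -> H 1 t = g t) /\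
    (forall s, inI s -> H s 0 = x /\ H s 1 = x).

Definition first_countable (X : Top) : Prop :=
  forall x : X, exists B : nat -> X -> Prop,
    (forall k, is_open (B k) /\ B k x) /\
    forall U, is_open U -> U x -> exists k, forall y, B k y -> U y.

Definition connected (X : Top) : Prop :=
  forall U : X -> Prop, is_open U -> is_closed U ->
    (forall x, U x) \/ (forall x, ~ U x).

Definition path_connected_set {X : Top} (A : X -> Prop) : Prop :=
  forall x y, A x -> A y -> exists g, is_path g x y /\ forall t, inI t -> A (g t).

Definition locally_path_connected (X : Top) : Prop :=
  forall (x : X) (U : X -> Prop), is_open U -> U x ->
    exists V, is_open V /\ V x /\ (forall y, V y -> U y) /\ path_connected_set V.

(** p : X -> Y is (up to homeomorphism of Y) the quotient map
    X -> X/(A_0,...,A_{n-1}) collapsing each A_i to a point. *)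
Definition is_collapse_quotient (X Y : Top) (n : nat) (A : nat -> X -> Prop)
    (p : X -> Y) : Prop :=
  (forall y : Y, exists x, p x = y) /\
  (forall x x', p x = p x' <-> x = x' \/ exists i, (i < n)%nat /\ A i x /\ A i x') /\
  (forall V : Y -> Prop, is_open V <-> is_open (fun x => V (p x))).

(** * The topological fundamental group pi_1^top(Y,y).
    Elements of pi_1(Y,y) are homotopy classes of loops; a set of classes is
    encoded as a homotopy-saturated set of loops. *)
Definition compact_in_I (K : R -> Prop) : Prop :=
  (forall t, K t -> inI t) /\
  forall (J : Type) (F : J -> R -> Prop),
    (forall j t, F j t -> exists eps, 0 < eps /\
         forall s, inI s -> Rabs (s - t) < eps -> F j s) ->
    (forall t, K t -> exists j, F j t) ->
    exists l : list J, forall t, K t -> exists j, In j l /\ F j t.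

Definition subbasic {Y : Top} (KU : (R -> Prop) * (Y -> Prop)) (f : R -> Y) : Prop :=
  forall t, fst KU t -> snd KU (f t).

Definition good_subbasic {Y : Top} (KU : (R -> Prop) * (Y -> Prop)) : Prop :=
  compact_in_I (fst KU) /\ is_open (snd KU).

(** Open sets of the loop space Omega(Y,y) (compact-open topology, i.e. the
    topology generated by the subbasic sets, restricted to loops at y). *)
Definition loopspace_open {Y : Top} (y : Y) (W : (R -> Y) -> Prop) : Prop :=
  (forall f, W f -> is_loop y f) /\
  forall f, W f -> exists l : list ((R -> Prop) * (Y -> Prop)),
    (forall KU, In KU l -> good_subbasic KU /\ subbasic KU f) /\
    (forall g, is_loop y g -> (forall KU, In KU l -> subbasic KU g) -> W g).

Definition saturated {Y : Top} (y : Y) (W : (R -> Y) -> Prop) : Prop :=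
  forall f g, W f -> is_loop y g -> loop_homotopic y f g -> W g.

(** Open subsets of pi_1^top(Y,y) (quotient topology from Omega(Y,y)). *)
Definition pi1_open {Y : Top} (y : Y) (W : (R -> Y) -> Prop) : Prop :=
  saturated y W /\ loopspace_open y W.

(** Closure in pi_1^top(Y,y) of a set S of classes (S saturated). *)
Definition pi1_closure {Y : Top} (y : Y) (S : (R -> Y) -> Prop) (g : R -> Y) : Prop :=
  is_loop y g /\
  forall W, pi1_open y W -> W g -> exists h, S h /\ W h.

Definition induced_image {X Y : Top} (p : X -> Y) (a : X) (g : R -> Y) : Prop :=
  is_loop (p a) g /\
  exists f : R -> X, is_loop a f /\ loop_homotopic (p a) (fun t => p (f t)) g.

(* Main.v *)
Require Import Defs.
From Stdlib Require Import Reals Lra Lia List Classical FunctionalExtensionality PropExtensionality.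
Open Scope R_scope.

Lemma interval_conn (a b : R) (S : R -> Prop) :
  a <= b -> S a ->
  (forall t, a <= t <= b -> S t -> exists eps, 0 < eps /\ forall s, a <= s <= b -> Rabs (s - t) < eps -> S s) ->
  (forall t, a <= t <= b -> ~ S t -> exists eps, 0 < eps /\ forall s, a <= s <= b -> Rabs (s - t) < eps -> ~ S s) ->
  forall t, a <= t <= b -> S t.
Proof.
  intros hab Sa hS hnS.
  set (E := fun x => a <= x <= b /\ forall y, a <= y <= x -> S y).
  assert (Eb : bound E) by (exists b; intros x [hx _]; lra).
  assert (Ea : exists x, E x) by (exists a; split; [lra| intros y hy; replace y with a by lra; exact Sa]).
  destruct (completeness E Eb Ea) as [m [hub hlub]].
  assert (am : a <= m) by (apply hub; split; [lra| intros y hy; replace y with a by lra; exact Sa]).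
  assert (mb : m <= b) by (apply hlub; intros x [hx _]; lra).
  assert (below : forall y, a <= y < m -> S y).
  { intros y hy. destruct (classic (exists x, E x /\ y < x)) as [[x [[hx1 hx2] hyx]]|hn].
    - apply hx2; lra.
    - assert (m <= y). { apply hlub. intros x hx. destruct (Rle_lt_dec x y); auto. exfalso; apply hn; eauto. }
      lra. }
  destruct (classic (S m)) as [Sm|nSm].
  - destruct (hS m (conj am mb) Sm) as [eps [heps Heps]].
    intros y hy.
    destruct (Rlt_le_dec y m) as [h|h]; [apply below; lra|].
    destruct (Rlt_le_dec y (m + eps)) as [h2|h2]; [apply Heps; [lra| split_Rabs; lra]|].
    exfalso.
    set (z := Rmin (m + eps/2) b).
    assert (Ez : E z).
    { split; [unfold z; apply Rmin_case_strong; lra|].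
      intros w hw. destruct (Rlt_le_dec w m); [apply below; lra|].
      apply Heps; [unfold z in hw; revert hw; apply Rmin_case_strong; intros; lra|].
      unfold z in hw; revert hw; apply Rmin_case_strong; intros; split_Rabs; lra. }
    assert (z <= m) by (apply hub; exact Ez).
    revert H; unfold z; apply Rmin_case_strong; intros; lra.
  - exfalso. destruct (hnS m (conj am mb) nSm) as [eps [heps Heps]].
    destruct (classic (exists x, E x /\ m - eps < x)) as [[x [[hx1 hx2] hxm]]|hn].
    + assert (x <= m) by (apply hub; split; auto).
      apply (Heps x); [lra| split_Rabs; lra| apply hx2; lra].
    + assert (m <= m - eps). { apply hlub. intros x hx. destruct (Rle_lt_dec x (m - eps)); auto. exfalso; apply hn; eauto. }
      lra.
Qed.

Definition relopen (F : R -> Prop) : Prop :=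
  forall t, F t -> exists eps, 0 < eps /\ forall s, inI s -> Rabs (s - t) < eps -> F s.

Lemma heine_borel (J : Type) (F : J -> R -> Prop) :
  (forall j, relopen (F j)) -> (forall t, inI t -> exists j, F j t) ->
  exists l : list J, forall t, inI t -> exists j, In j l /\ F j t.
Proof.
  intros hop hcov.
  assert (H := interval_conn 0 1 (fun u => exists l : list J, forall t, 0 <= t <= u -> exists j, In j l /\ F j t)).
  destruct (H ltac:(lra)) with (t := 1) as [l hl]; [ | | | unfold inI; lra | exists l; intros t ht; apply hl; exact ht ].
  - destruct (hcov 0) as [j hj]; [unfold inI; lra|]. exists (j :: nil). intros t ht. replace t with 0 by lra. exists j; simpl; auto.
  - intros u hu [l hl]. destruct (hcov u hu) as [j hj]. destruct (hop j u hj) as [eps [heps He]].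
    exists eps; split; auto. intros s hs hsu. exists (j :: l). intros t ht.
    destruct (Rle_lt_dec t u).
    + destruct (hl t) as [j' [? ?]]; [lra|]. exists j'; simpl; auto.
    + exists j; split; simpl; auto. apply He; [unfold inI; lra| split_Rabs; lra].
  - intros u hu hn. destruct (hcov u hu) as [j hj]. destruct (hop j u hj) as [eps [heps He]].
    exists eps; split; auto. intros s hs hsu [l hl]. apply hn. exists (j :: l). intros t ht.
    destruct (Rle_lt_dec t s).
    + destruct (hl t) as [j' [? ?]]; [lra|]. exists j'; simpl; auto.
    + exists j; split; simpl; auto. apply He; [unfold inI; lra| split_Rabs; lra].
Qed.

Lemma nat_list_bound (l : list nat) : exists M, forall m, In m l -> (m <= M)%nat.
Proof.
  induction l as [|x l [M hM]]; [exists 0%nat; intros m []|].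
  exists (Nat.max x M). intros m [<-|hm]; [apply Nat.le_max_l|].
  apply Nat.le_trans with M; [auto|apply Nat.le_max_r].
Qed.

Lemma compact_closed (K : R -> Prop) (t : R) :
  compact_in_I K -> ~ K t -> exists eps, 0 < eps /\ forall s, Rabs (s - t) < eps -> ~ K s.
Proof.
  intros [hKI hK] nKt.
  destruct (hK nat (fun m s => inI s /\ / INR (S m) < Rabs (s - t))) as [l hl].
  - intros m s [hs hst]. exists (Rabs (s - t) - / INR (S m)). split; [lra|].
    intros s' hs' h. split; auto. split_Rabs; lra.
  - intros s hs.
    assert (Rabs (s - t) > 0). { apply Rabs_pos_lt. intro h. apply nKt. replace t with s by lra. auto. }
    destruct (INR_archimed (Rabs (s - t)) 1 H) as [n hn].
    exists n. split; [apply hKI; auto|].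
    assert (0 < INR (S n)) by (apply lt_0_INR; lia).
    rewrite S_INR in *. 
    apply Rmult_lt_reg_l with (INR n + 1); [lra|]. rewrite Rinv_r; [|lra]. nra.
  - destruct (nat_list_bound l) as [M hM].
    assert (0 < INR (S M)) by (apply lt_0_INR; lia).
    exists (/ INR (S M)). split; [apply Rinv_0_lt_compat; auto|].
    intros s hs Ks. destruct (hl s Ks) as [m [hm [_ hms]]].
    assert (le: INR (S m) <= INR (S M)) by (apply le_INR; specialize (hM m hm); lia).
    assert (0 < INR (S m)) by (apply lt_0_INR; lia).
    assert (/ INR (S M) <= / INR (S m)) by (apply Rinv_le_contravar; auto).
    lra.
Qed.

Definition Phi {Y : Top} (g : R -> Y) (l : list ((R -> Prop) * (Y -> Prop))) (s s' : R) : Prop :=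
  forall KU, In KU l -> fst KU s' -> snd KU (g s).

Lemma list_min {J : Type} (f : J -> R) (l : list J) :
  (forall j, In j l -> 0 < f j) -> exists d, 0 < d /\ forall j, In j l -> d <= f j.
Proof.
  induction l as [|x l IH]; intros hpos; [exists 1; split; [lra| intros j []]|].
  destruct IH as [d [hd hdl]]; [intros; apply hpos; simpl; auto|].
  exists (Rmin d (f x)). split; [apply Rmin_case; auto; apply hpos; simpl; auto|].
  intros j [<-|hj]; [apply Rmin_r|]. apply Rle_trans with d; [apply Rmin_l| auto].
Qed.

Lemma local_delta {Y : Top} (g : R -> Y) (l : list ((R -> Prop) * (Y -> Prop))) :
  cont_on_I g -> (forall KU, In KU l -> good_subbasic KU /\ subbasic KU g) ->
  forall t, inI t -> exists d, 0 < d /\ forall s s', inI s -> inI s' ->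
     Rabs (s - t) < d -> Rabs (s' - t) < d -> Phi g l s s'.
Proof.
  intros hg. induction l as [|KU l IH]; intros hl t ht.
  - exists 1. split; [lra|]. intros s s' _ _ _ _ KU [].
  - destruct (IH ltac:(intros; apply hl; simpl; auto) t ht) as [d1 [hd1 H1]].
    destruct (hl KU (or_introl eq_refl)) as [[hK hU] hsub].
    destruct (classic (fst KU t)) as [Kt|nKt].
    + destruct (hg _ hU t ht (hsub t Kt)) as [e [he He]].
      exists (Rmin d1 e). split; [apply Rmin_case; auto|].
      intros s s' hs hs' h1 h2 KU' [<-|hin] hK'.
      * apply He; auto. apply Rlt_le_trans with (Rmin d1 e); auto; apply Rmin_r.
      * apply (H1 s s'); auto; apply Rlt_le_trans with (Rmin d1 e); auto; apply Rmin_l.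
    + destruct (compact_closed _ t hK nKt) as [e [he He]].
      exists (Rmin d1 e). split; [apply Rmin_case; auto|].
      intros s s' hs hs' h1 h2 KU' [<-|hin] hK'.
      * exfalso. apply (He s'); auto. apply Rlt_le_trans with (Rmin d1 e); auto; apply Rmin_r.
      * apply (H1 s s'); auto; apply Rlt_le_trans with (Rmin d1 e); auto; apply Rmin_l.
Qed.

Lemma lebesgue {Y : Top} (g : R -> Y) (l : list ((R -> Prop) * (Y -> Prop))) :
  cont_on_I g -> (forall KU, In KU l -> good_subbasic KU /\ subbasic KU g) ->
  exists d, 0 < d /\ forall s s', inI s -> inI s' -> Rabs (s - s') < d -> Phi g l s s'.
Proof.
  intros hg hl.
  set (Q := fun q : R * R => inI (fst q) /\ 0 < snd q /\ forall s s', inI s -> inI s' ->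
     Rabs (s - fst q) < snd q -> Rabs (s' - fst q) < snd q -> Phi g l s s').
  set (F := fun (j : {q | Q q}) s => inI s /\ Rabs (s - fst (proj1_sig j)) < snd (proj1_sig j) / 2).
  destruct (heine_borel _ F) as [L hL].
  - intros [[t d] [ht [hd hQ]]] s [hs hst]. simpl in *.
    exists (d/2 - Rabs (s - t)). split; [lra|]. intros s' hs' h. split; auto. simpl. split_Rabs; lra.
  - intros t ht. destruct (local_delta g l hg hl t ht) as [d [hd Hd]].
    exists (exist Q (t, d) (conj ht (conj hd Hd))). unfold F; simpl. split; auto. split_Rabs; lra.
  - destruct (list_min (fun j : {q | Q q} => snd (proj1_sig j) / 2) L) as [d [hd Hd]].
    { intros [[t e] [h1 [he h2]]] _; simpl in *; lra. }
    exists d. split; auto. intros s s' hs hs' hss'.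
    destruct (hL s hs) as [[[t e] [ht [he He]]] [hin [_ hst]]]. simpl in *.
    specialize (Hd _ hin). simpl in Hd.
    apply He; auto; split_Rabs; lra.
Qed.

Definition cont_on {X : Top} (a b : R) (f : R -> X) : Prop :=
  forall U : X -> Prop, is_open U -> forall t, a <= t <= b -> U (f t) ->
    exists eps, 0 < eps /\ forall s, a <= s <= b -> Rabs (s - t) < eps -> U (f s).

Lemma cont_on_ext {X : Top} a b (f g : R -> X) :
  (forall t, a <= t <= b -> f t = g t) -> cont_on a b f -> cont_on a b g.
Proof.
  intros he hf U hU t ht hUt. rewrite <- he in hUt by auto.
  destruct (hf U hU t ht hUt) as [e [he' He]]. exists e; split; auto.
  intros s hs hst. rewrite <- he by auto. auto.
Qed.

Lemma cont_on_glue {X : Top} a c b (f : R -> X) :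
  a <= c <= b -> cont_on a c f -> cont_on c b f -> cont_on a b f.
Proof.
  intros hc h1 h2 U hU t ht hUt.
  destruct (Rlt_le_dec t c) as [tc|tc].
  - destruct (h1 U hU t ltac:(lra) hUt) as [e [he He]].
    exists (Rmin e (c - t)). split; [apply Rmin_case; lra|].
    intros s hs hst. assert (hm1 := Rmin_l e (c - t)). assert (hm2 := Rmin_r e (c - t)).
    apply He; [split_Rabs; lra| lra].
  - destruct (Rlt_le_dec c t) as [ct|ct].
    + destruct (h2 U hU t ltac:(lra) hUt) as [e [he He]].
      exists (Rmin e (t - c)). split; [apply Rmin_case; lra|].
      intros s hs hst. assert (hm1 := Rmin_l e (t - c)). assert (hm2 := Rmin_r e (t - c)).
      apply He; [split_Rabs; lra| lra].
    + destruct (h1 U hU t ltac:(lra) hUt) as [e1 [he1 He1]].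
      destruct (h2 U hU t ltac:(lra) hUt) as [e2 [he2 He2]].
      exists (Rmin e1 e2). split; [apply Rmin_case; lra|].
      intros s hs hst. assert (hm1 := Rmin_l e1 e2). assert (hm2 := Rmin_r e1 e2).
      destruct (Rle_lt_dec s c); [apply He1 | apply He2]; lra.
Qed.

Lemma cont_on_affine {X : Top} a b (f : R -> X) :
  a < b -> cont_on 0 1 f -> cont_on a b (fun t => f ((t - a) / (b - a))).
Proof.
  intros hab hf U hU t ht hUt.
  assert (hba : 0 < b - a) by lra.
  assert (hi : 0 <= (t - a) / (b - a) <= 1).
  { split; [unfold Rdiv; apply Rmult_le_pos; [lra| left; apply Rinv_0_lt_compat; lra]|]. apply Rmult_le_reg_r with (b - a); auto.
    unfold Rdiv; rewrite Rmult_assoc, Rinv_l; lra. }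
  destruct (hf U hU _ hi hUt) as [e [he He]].
  exists (e * (b - a)). split; [nra|]. intros s hs hst. apply He.
  - split; [unfold Rdiv; apply Rmult_le_pos; [lra| left; apply Rinv_0_lt_compat; lra]|]. apply Rmult_le_reg_r with (b - a); auto.
    unfold Rdiv; rewrite Rmult_assoc, Rinv_l; lra.
  - replace ((s - a) / (b - a) - (t - a) / (b - a)) with ((s - t) / (b - a)) by (field; lra).
    unfold Rdiv. rewrite Rabs_mult, Rabs_inv, (Rabs_right (b - a)) by lra.
    apply Rmult_lt_reg_r with (b - a); auto. rewrite Rmult_assoc, Rinv_l; lra.
Qed.

Lemma cont_on_restr {X : Top} a b a' b' (f : R -> X) :
  a <= a' -> b' <= b -> cont_on a b f -> cont_on a' b' f.
Proof.
  intros h1 h2 hf U hU t ht hUt. destruct (hf U hU t ltac:(lra) hUt) as [e [he He]].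
  exists e; split; auto. intros s hs hst; apply He; auto; lra.
Qed.

Lemma cont_on_comp {X Y : Top} a b (f : R -> X) (p : X -> Y) :
  continuous p -> cont_on a b f -> cont_on a b (fun t => p (f t)).
Proof. intros hp hf U hU. apply (hf (fun x => U (p x))). apply hp; auto. Qed.

Lemma open_local {X : Top} (S : X -> Prop) :
  (forall x, S x -> exists N, is_open N /\ N x /\ forall y, N y -> S y) -> is_open S.
Proof.
  intros h.
  assert (E : (fun x => exists j : {N : X -> Prop | is_open N /\ forall y, N y -> S y}, proj1_sig j x) = S).
  { apply functional_extensionality. intros x. apply propositional_extensionality. split.
    - intros [[N [hN1 hN]] hx]; simpl in hx; auto.
    - intros hx. destruct (h x hx) as [N [hN [hNx hNS]]]. exists (exist _ N (conj hN hNS)); simpl; auto. }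
  rewrite <- E. apply open_union. intros [N [hN hN2]]; simpl; auto.
Qed.

Definition pconcat {X : Top} (f g : R -> X) (t : R) : X :=
  if Rle_dec t (1/2) then f (2 * t) else g (2 * t - 1).

Lemma const_path {X : Top} (x : X) : is_path (fun _ => x) x x.
Proof.
  split; [|auto]. intros U hU t ht hUt. exists 1; split; [lra|auto].
Qed.

Lemma concat_path {X : Top} (f g : R -> X) x y z (P : X -> Prop) :
  is_path f x y -> is_path g y z -> (forall t, inI t -> P (f t)) -> (forall t, inI t -> P (g t)) ->
  is_path (pconcat f g) x z /\ forall t, inI t -> P (pconcat f g t).
Proof.
  intros [cf [f0 f1]] [cg [g0 g1]] hPf hPg. unfold pconcat. repeat split.
  - change (cont_on 0 1 (pconcat f g)). apply cont_on_glue with (1/2); [lra| |].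
    + apply cont_on_ext with (fun t => f ((t - 0) / (1/2 - 0))).
      * intros t ht. unfold pconcat. destruct (Rle_dec t (1/2)); [|lra]. f_equal. field.
      * apply cont_on_affine; [lra| exact cf].
    + apply cont_on_ext with (fun t => g ((t - 1/2) / (1 - 1/2))).
      * intros t ht. unfold pconcat. destruct (Rle_dec t (1/2)).
        -- assert (t = 1/2) by lra. subst t. replace ((1/2 - 1/2) / (1 - 1/2)) with 0 by field.
           replace (2 * (1/2)) with 1 by field. congruence.
        -- f_equal. field.
      * apply cont_on_affine; [lra| exact cg].
  - destruct (Rle_dec 0 (1/2)); [|lra]. rewrite Rmult_0_r; auto.
  - destruct (Rle_dec 1 (1/2)); [lra|]. replace (2 * 1 - 1) with 1 by ring; auto.
  - intros t ht. unfold inI in ht. destruct (Rle_dec t (1/2)).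
    + apply hPf. unfold inI; lra.
    + apply hPg. unfold inI; lra.
Qed.

Section Q.
Variables (X Y : Top) (n : nat) (A : nat -> X -> Prop) (p : X -> Y).
Hypothesis hlpc : locally_path_connected X.
Hypothesis hpc : forall i, (i < n)%nat -> path_connected_set (A i).
Hypothesis hp : is_collapse_quotient X Y n A p.

Lemma p_cont : continuous p.
Proof. destruct hp as [_ [_ h]]. intros V hV. apply h; auto. Qed.

Lemma fiber_path z w : p z = p w -> exists g, is_path g z w /\ forall t, inI t -> p (g t) = p z.
Proof.
  intros e. destruct hp as [_ [heq _]]. destruct (proj1 (heq z w) e) as [<-|[i [hi [Az Aw]]]].
  - exists (fun _ => z). split; [apply const_path| auto].
  - destruct (hpc i hi z w Az Aw) as [g [hg hgA]]. exists g. split; auto.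
    intros t ht. apply heq. right. exists i. auto.
Qed.

Lemma lift_path (V : Y -> Prop) a b (g : R -> Y) x0 x1 :
  is_open V -> a <= b -> cont_on a b g -> (forall s, a <= s <= b -> V (g s)) ->
  p x0 = g a -> p x1 = g b ->
  exists gam, is_path gam x0 x1 /\ forall t, inI t -> V (p (gam t)).
Proof.
  intros hV hab hg hgV e0 e1.
  set (C := fun z => exists gam, is_path gam x0 z /\ forall t, inI t -> V (p (gam t))).
  assert (Cext : forall z w d, C z -> is_path d z w -> (forall t, inI t -> V (p (d t))) -> C w).
  { intros z w d [gam [hgam hgV']] hd hdV.
    destruct (concat_path gam d x0 z w (fun x => V (p x)) hgam hd hgV' hdV) as [h1 h2].
    exists (pconcat gam d); auto. }
  assert (PV : is_open (fun x => V (p x))) by (apply p_cont; auto).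
  assert (Cfib : forall z w, C z -> p z = p w -> C w).
  { intros z w hz e. destruct (fiber_path z w e) as [d [hd hdp]].
    apply (Cext z w d hz hd). intros t ht. rewrite hdp by auto.
    destruct hz as [gam [[_ [_ g1]] hgV']]. rewrite <- g1. apply hgV'. unfold inI; lra. }
  assert (Cnbhd : forall x, V (p x) -> exists N, is_open N /\ N x /\ (forall y, N y -> V (p y)) /\
       forall y, N y -> (C x <-> C y)).
  { intros x hx. destruct (hlpc x _ PV hx) as [N [hN [hNx [hNV hNpc]]]].
    exists N. repeat split; auto.
    - intros Cx. destruct (hNpc x y hNx H) as [d [hd hdN]]. apply (Cext x y d Cx hd). intros t ht; apply hNV; auto.
    - intros Cy. destruct (hNpc y x H hNx) as [d [hd hdN]]. apply (Cext y x d Cy hd). intros t ht; apply hNV; auto. }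
  set (Q := fun y => V y /\ exists z, p z = y /\ C z).
  assert (QC : forall x, Q (p x) -> C x).
  { intros x [_ [z [e hz]]]. apply (Cfib z x hz e). }
  assert (hQ : is_open Q).
  { destruct hp as [_ [_ ht]]. apply ht. apply open_local. intros x hx.
    destruct (Cnbhd x (proj1 hx)) as [N [hN [hNx [hNV hNC]]]]. exists N. split; [auto|split; [auto|]].
    intros y H. split; [apply hNV; auto|].
    exists y. split; auto. apply (hNC y H). apply QC; auto. }
  set (Rr := fun y => V y /\ ~ Q y).
  assert (hR : is_open Rr).
  { destruct hp as [_ [_ ht]]. apply ht. apply open_local. intros x hx.
    destruct (Cnbhd x (proj1 hx)) as [N [hN [hNx [hNV hNC]]]]. exists N. split; [auto|split; [auto|]].
    intros y H. split; [apply hNV; auto|].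
    intros hQy. apply (proj2 hx). split; [apply (proj1 hx)|]. exists x. split; auto.
      apply (hNC y H). apply QC; auto. }
  assert (Qb : Q (g b)).
  { apply (interval_conn a b (fun s => Q (g s)) hab); [| | |lra].
    - split; [apply hgV; lra|]. exists x0. split; auto. exists (fun _ => x0). split; [apply const_path|].
      intros; rewrite e0; apply hgV; lra.
    - intros t ht hQt. apply (hg Q hQ t ht hQt).
    - intros t ht hnQ. destruct (hg Rr hR t ht (conj (hgV t ht) hnQ)) as [e [he He]].
      exists e; split; auto. intros s hs hst. apply He; auto. }
  rewrite <- e1 in Qb. apply QC in Qb. exact Qb.
Qed.

End Q.

Lemma open_eq {X : Top} (S T : X -> Prop) : (forall x, S x <-> T x) -> is_open S -> is_open T.
Proof.
  intros h hS. replace T with S; auto. apply functional_extensionality; intros x; apply propositional_extensionality; auto.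
Qed.

Lemma open_cond_list {Y : Top} (P : (R -> Prop) -> Prop) (l : list ((R -> Prop) * (Y -> Prop))) :
  (forall KU, In KU l -> is_open (snd KU)) ->
  is_open (fun y => forall KU, In KU l -> P (fst KU) -> snd KU y).
Proof.
  induction l as [|KU l IH]; intros hl.
  - apply (open_eq (fun _ => True)); [|apply open_full]. intros y; split; [intros _ KU []|auto].
  - assert (h1 : is_open (fun y => P (fst KU) -> snd KU y)).
    { destruct (classic (P (fst KU))) as [h|h].
      + apply (open_eq (snd KU)); [|apply hl; simpl; auto]. intros y; split; auto.
      + apply (open_eq (fun _ => True)); [|apply open_full]. intros y; split; [intros _ hh; contradiction|auto]. }
    assert (h2 := IH ltac:(intros; apply hl; simpl; auto)).
    refine (open_eq _ _ _ (open_inter _ _ _ h1 h2)). intros y; split; intros H.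
    + destruct H as [Ha Hb]. intros KU' [<-|hin]; auto.
    + split; [apply H; simpl; auto| intros KU' hin; apply H; simpl; auto].
Qed.

Section M.
Variables (X Y : Top) (n : nat) (A : nat -> X -> Prop) (p : X -> Y).
Hypothesis hlpc : locally_path_connected X.
Hypothesis hpc : forall i, (i < n)%nat -> path_connected_set (A i).
Hypothesis hp : is_collapse_quotient X Y n A p.

Lemma approx (a : X) (g : R -> Y) (l : list ((R -> Prop) * (Y -> Prop))) :
  is_loop (p a) g -> (forall KU, In KU l -> good_subbasic KU /\ subbasic KU g) ->
  exists f, is_loop a f /\ forall KU, In KU l -> subbasic KU (fun t => p (f t)).
Proof.
  intros [hg [g0 g1]] hl.
  destruct (lebesgue g l hg hl) as [d [hd Hd]].
  destruct (INR_archimed d 1 hd) as [n0 hn0].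
  set (N := S n0). set (Nr := INR N).
  assert (hNr : 0 < Nr) by (apply lt_0_INR; unfold N; lia).
  assert (hNd : / Nr < d).
  { assert (INR n0 <= Nr) by (apply le_INR; unfold N; lia).
    apply Rmult_lt_reg_l with Nr; auto. rewrite Rinv_r by lra. nra. }
  assert (hinv : 0 < / Nr) by (apply Rinv_0_lt_compat; auto).
  set (tk := fun k : nat => INR k / Nr).
  assert (tkS : forall k, tk (S k) = tk k + / Nr) by (intros k; unfold tk; rewrite S_INR; field; lra).
  assert (tk0 : tk 0%nat = 0) by (unfold tk; simpl; field; lra).
  assert (tkN : tk N = 1) by (unfold tk; fold Nr; field; lra).
  assert (tkpos : forall k, 0 <= tk k) by (intros k; unfold tk; unfold Rdiv; apply Rmult_le_pos; [apply pos_INR| left; apply Rinv_0_lt_compat; auto]).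
  assert (tkle : forall k, (k <= N)%nat -> tk k <= 1).
  { intros k hk. rewrite <- tkN. unfold tk, Rdiv. apply Rmult_le_compat_r; [left; apply Rinv_0_lt_compat; auto| apply le_INR; auto]. }
  set (Vk := fun k : nat => fun y => forall KU, In KU l -> (exists s', tk k <= s' <= tk (S k) /\ fst KU s') -> snd KU y).
  assert (piece : forall k, (k < N)%nat -> forall x0 x1, p x0 = g (tk k) -> p x1 = g (tk (S k)) ->
     exists h, cont_on (tk k) (tk (S k)) h /\ h (tk k) = x0 /\ h (tk (S k)) = x1 /\
       forall s, tk k <= s <= tk (S k) -> forall KU, In KU l -> fst KU s -> snd KU (p (h s))).
  { intros k hk x0 x1 e0 e1.
    assert (hk1 := tkle (S k) hk). assert (hk0 := tkpos k). assert (hkS := tkS k).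
    assert (hVk : is_open (Vk k)).
    { apply (open_cond_list (fun K => exists s', tk k <= s' <= tk (S k) /\ K s')).
      intros KU hin; apply (hl KU hin). }
    destruct (lift_path X Y n A p hlpc hpc hp (Vk k) (tk k) (tk (S k)) g x0 x1 hVk) as [gam [[cg [ga0 ga1]] hgV]].
    - lra.
    - apply (cont_on_restr 0 1); auto. 
    - intros s hs KU hin [s' [hs' hK]]. apply (Hd s s'); auto; [unfold inI; lra| unfold inI; lra| split_Rabs; lra].
    - auto.
    - auto.
    - exists (fun t => gam ((t - tk k) / (tk (S k) - tk k))). split; [apply cont_on_affine; [lra| exact cg]|].
      split; [replace ((tk k - tk k) / (tk (S k) - tk k)) with 0 by (field; lra); auto|].
      split; [replace ((tk (S k) - tk k) / (tk (S k) - tk k)) with 1 by (field; lra); auto|].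
      intros s hs KU hin hK. apply (hgV ((s - tk k) / (tk (S k) - tk k))).
      + assert (0 < tk (S k) - tk k) by lra.
        split; [unfold Rdiv; apply Rmult_le_pos; [lra| left; apply Rinv_0_lt_compat; lra]|].
        apply Rmult_le_reg_r with (tk (S k) - tk k); auto. unfold Rdiv; rewrite Rmult_assoc, Rinv_l; lra.
      + auto.
      + exists s. split; auto. }
  assert (ind : forall k, (k < N)%nat -> forall x', p x' = g (tk (S k)) ->
     exists f, cont_on 0 (tk (S k)) f /\ f 0 = a /\ f (tk (S k)) = x' /\
       forall s, 0 <= s <= tk (S k) -> forall KU, In KU l -> fst KU s -> snd KU (p (f s))).
  { induction k as [|k IH]; intros hk x' e'.
    - destruct (piece 0%nat hk a x') as [h [ch [h0 [h1 hc]]]]; [rewrite tk0; auto| auto|].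
      rewrite tk0 in *. exists h. auto.
    - destruct hp as [hsurj _]. destruct (hsurj (g (tk (S k)))) as [y ey].
      destruct (IH ltac:(lia) y ey) as [f [cf [f0 [f1 fc]]]].
      destruct (piece (S k) hk y x' ey e') as [h [ch [h0 [h1 hc]]]].
      assert (hkS := tkS (S k)). assert (hk0 := tkpos (S k)).
      exists (fun t => if Rle_dec t (tk (S k)) then f t else h t). repeat split.
      + apply cont_on_glue with (tk (S k)); [lra| |].
        * apply cont_on_ext with f; auto. intros t ht. destruct (Rle_dec t (tk (S k))); [auto|lra].
        * apply cont_on_ext with h; auto. intros t ht. destruct (Rle_dec t (tk (S k))); [|auto].
          assert (t = tk (S k)) by lra. subst t. congruence.
      + destruct (Rle_dec 0 (tk (S k))); [auto|lra].
      + destruct (Rle_dec (tk (S (S k))) (tk (S k))); [lra|auto].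
      + intros s hs KU hin hK. destruct (Rle_dec s (tk (S k))).
        * apply fc; auto; lra.
        * apply hc; auto; lra. }
  destruct (ind (pred N) ltac:(unfold N; lia) a) as [f [cf [f0 [f1 fc]]]];
    replace (S (pred N)) with N in * by (unfold N; lia); rewrite tkN in *; [rewrite g1; auto|].
  exists f. split; [split; [exact cf| split; auto]|].
  intros KU hin t hK. destruct (hl KU hin) as [[[hKI _] _] _].
  apply fc; auto. apply hKI; auto.
Qed.

End M.

Lemma homot_refl {Y : Top} (y : Y) (h : R -> Y) : is_loop y h -> loop_homotopic y h h.
Proof.
  intros [ch [h0 h1]]. exists (fun s t => h t). repeat split; auto.
  intros U hU s t hs ht hUt. destruct (ch U hU t ht hUt) as [e [he He]].
  exists e; split; auto.
Qed.

Theorem corollary3p12 (X Y : Top) (n : nat) (A : nat -> X -> Prop) (p : X -> Y)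
  (hfc : first_countable X) (hconn : connected X) (hlpc : locally_path_connected X)
  (hdisj : forall i j x, (i < n)%nat -> (j < n)%nat -> i <> j -> A i x -> A j x -> False)
  (hpc : forall i, (i < n)%nat -> path_connected_set (A i))
  (hcl : forall i, (i < n)%nat -> is_closed (A i))
  (hp : is_collapse_quotient X Y n A p) :
  forall a : X, (exists i, (i < n)%nat /\ A i a) ->
    forall g : R -> Y, pi1_closure (p a) (induced_image p a) g <-> is_loop (p a) g.
Proof.
  intros a _ g. split.
  - intros [hl _]; exact hl.
  - intros hg. split; auto. intros W [hsat [hWl hWo]] Wg.
    destruct (hWo g Wg) as [l [hl1 hl2]].
    destruct (approx X Y n A p hlpc hpc hp a g l hg hl1) as [f [[cf [f0 f1]] hfl]].
    assert (hloop : is_loop (p a) (fun t => p (f t))).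
    { split; [apply (cont_on_comp 0 1 f p (p_cont X Y n A p hp) cf)| split; congruence]. }
    exists (fun t => p (f t)). split.
    + split; auto. exists f. split; [split; auto| apply homot_refl; auto].
    + apply hl2; auto.
Qed.
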